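(* Let $k$ be a positive integer and $2\le l\le k+4$. Let $N^l_k$ be the lattice ${\mathbb{Z}}^{l+1}$ with basis $\ell_0,\dots,\ell_l$ and scalar product $(\ell_0,\ell_0)=k$, $(\ell_i,\ell_i)=-1$ for $1\le i\le l$, $(\ell_i,\ell_j)=0$ for $i\ne j$, and let $\omega=-\frac{k+2}{k}\ell_0+\ell_1+\dots+\ell_l\in N^l_k\otimes{\mathbb{Q}}$. Let $R^l_k$ be the set of $\ell\in N^l_k$ with $(\ell,\ell)=-2$ and $(\ell,\omega)=0$. Then $R^l_k\subset\omega^\perp$ is a root system. If $l\ge k+2$, it is a root system in the vector space $\omega^\perp\otimes_{\mathbb{Z}}{\mathbb{R}}\subset N^l_k\otimes_{\mathbb{Z}}{\mathbb{R}}$. If $2\le l<k+2$, $R^l_k$ spans a hyperplane in $\omega^\perp\otimes_{\mathbb{Z}}{\mathbb{R}}$.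
   Context: $\omega^\perp$ denotes the sublattice of $N^l_k$ of elements orthogonal to $\omega$. A root system in a Euclidean space $V$ is a finite spanning set $R$ such that the only multiples of $x\in R$ in $R$ are $\pm x$, $R$ is closed under the reflections in its elements, and $2(x,m)/(x,x)\in{\mathbb{Z}}$ for all $x,m\in R$ (here with respect to the negative of the scalar product, which is positive definite on $\omega^\perp$). *)

(* Defs.v *)
From HB Require Import structures.
From mathcomp Require Import all_boot all_order all_algebra.
From mathcomp Require Import reals.
Set Implicit Arguments. Unset Strict Implicit. Unset Printing Implicit Defensive.
Import Order.TTheory GRing.Theory Num.Theory.
Local Open Scope ring_scope.

(* The real vector space N^l_k (x) R is modelled as 'rV[R]_(l.+1); coordinate
   i corresponds to the basis vector \ell_i (coordinate 0 is \ell_0). *)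

Definition Nform (R : realType) (k l : nat) (x y : 'rV[R]_(l.+1)) : R :=
  \sum_(i < l.+1) (if i == ord0 then k%:R else -1) * x 0 i * y 0 i.

(* the negative of the scalar product (positive definite on omega^perp) *)
Definition Eform (R : realType) (k l : nat) (x y : 'rV[R]_(l.+1)) : R :=
  - Nform k x y.

Definition omega (R : realType) (k l : nat) : 'rV[R]_(l.+1) :=
  \row_(i < l.+1) (if i == ord0 then - ((k + 2)%:R / k%:R) else 1).

Definition in_lattice (R : realType) (l : nat) (x : 'rV[R]_(l.+1)) : Prop :=
  forall i, x 0 i \is a Num.int.

Definition Rlk_roots (R : realType) (k l : nat) (x : 'rV[R]_(l.+1)) : Prop :=
  [/\ in_lattice x, Nform k x x = -2 & Nform k x (omega R k l) = 0].

Definition omega_perp (R : realType) (k l : nat) : {vspace 'rV[R]_(l.+1)} :=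
  lker (linfun (fun x : 'rV[R]_(l.+1) => (Nform k x (omega R k l) : R^o))).

Definition root_system (R : realType) (n : nat)
    (E : 'rV[R]_n -> 'rV[R]_n -> R) (V : {vspace 'rV[R]_n}) (s : seq 'rV[R]_n) :
    Prop :=
  [/\ (forall v, v \in V -> v != 0 -> 0 < E v v),
      <<s>>%VS = V,
      (forall x (c : R), x \in s -> c *: x \in s -> c = 1 \/ c = -1),
      (forall x m, x \in s -> m \in s -> m - (2 * E x m / E x x) *: x \in s)
    & (forall x m, x \in s -> m \in s -> 2 * E x m / E x x \is a Num.int)].

(* Main.v *)
Require Import Defs.
From HB Require Import structures.
From mathcomp Require Import all_boot all_order all_algebra.
From mathcomp Require Import reals.
From mathcomp Require Import ring lra.
Set Implicit Arguments. Unset Strict Implicit. Unset Printing Implicit Defensive.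
Import Order.TTheory GRing.Theory Num.Theory.
Local Open Scope ring_scope.

Definition mk (R : realType) (l : nat) (a : R) (b : 'I_l -> R) : 'rV[R]_(l.+1) :=
  \row_i (if unlift ord0 i is Some j then b j else a).

Lemma mk0 (R : realType) (l : nat) (a : R) (b : 'I_l -> R) : mk a b 0 ord0 = a.
Proof. by rewrite mxE unlift_none. Qed.

Lemma mkS (R : realType) (l : nat) (a : R) (b : 'I_l -> R) j : mk a b 0 (lift ord0 j) = b j.
Proof. by rewrite mxE liftK. Qed.

Lemma mk_eta (R : realType) (l : nat) (x : 'rV[R]_(l.+1)) :
  x = mk (x 0 ord0) (fun j => x 0 (lift ord0 j)).
Proof.
apply/rowP => i; rewrite mxE; case: unliftP => [j ->|->] //.
Qed.

Lemma NformE (R : realType) (k l : nat) (x y : 'rV[R]_(l.+1)) :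
  Nform k x y = k%:R * x 0 ord0 * y 0 ord0
     - \sum_(j < l) x 0 (lift ord0 j) * y 0 (lift ord0 j).
Proof.
rewrite /Nform big_ord_recl eqxx; congr (_ + _).
rewrite -sumrN; apply: eq_bigr => j _.
rewrite eq_sym (negbTE (neq_lift _ _)). ring.
Qed.

Lemma Nform_mk (R : realType) (k l : nat) (a a' : R) (b b' : 'I_l -> R) :
  Nform k (mk a b) (mk a' b') = k%:R * a * a' - \sum_(j < l) b j * b' j.
Proof. by rewrite NformE !mk0; under eq_bigr do rewrite !mkS. Qed.

Lemma NformC (R : realType) (k l : nat) (x y : 'rV[R]_(l.+1)) : Nform k x y = Nform k y x.
Proof. by apply: eq_bigr => i _; ring. Qed.

Lemma NformDZl (R : realType) (k l : nat) (c : R) (x y z : 'rV[R]_(l.+1)) :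
  Nform k (c *: x + y) z = c * Nform k x z + Nform k y z.
Proof.
rewrite /Nform mulr_sumr -big_split; apply: eq_bigr => i _; rewrite !mxE; rewrite /=; ring.
Qed.

Lemma NformZl (R : realType) (k l : nat) (c : R) (x z : 'rV[R]_(l.+1)) :
  Nform k (c *: x) z = c * Nform k x z.
Proof.
rewrite /Nform mulr_sumr; apply: eq_bigr => i _; rewrite !mxE /=; ring.
Qed.

Lemma omegaE (R : realType) (k l : nat) : omega R k l = mk (- ((k + 2)%:R / k%:R)) (fun _ => 1).
Proof. by apply/rowP => i; rewrite !mxE; case: unliftP => [j ->|->]; rewrite ?mxE. Qed.

Lemma Nform_omega (R : realType) (k l : nat) (x : 'rV[R]_(l.+1)) : (0 < k)%N ->
  Nform k x (omega R k l) = - (k + 2)%:R * x 0 ord0 - \sum_(j < l) x 0 (lift ord0 j).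
Proof.
move=> k0; rewrite NformE omegaE mk0; under eq_bigr do rewrite mkS mulr1.
congr (_ - _); have kn0 : (k%:R : R) != 0 by rewrite pnatr_eq0 -lt0n.
by field.
Qed.

Lemma cs_ineq (R : realType) (n : nat) (b : 'I_n -> R) :
  (\sum_j b j) ^+ 2 <= n%:R * \sum_j b j ^+ 2.
Proof.
set S := \sum_j b j; set Q := \sum_j b j ^+ 2.
have H : 0 <= \sum_i \sum_j (b i - b j) ^+ 2.
  by apply: sumr_ge0 => i _; apply: sumr_ge0 => j _; apply: sqr_ge0.
have E : \sum_i \sum_j (b i - b j) ^+ 2 = (n%:R * Q) *+ 2 - (S ^+ 2) *+ 2.
  under eq_bigr => i _.
    under eq_bigr do rewrite sqrrB.
    rewrite big_split sumrB /= sumr_const card_ord sumrMnl -mulr_sumr.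
  over.
  rewrite big_split sumrB /=. rewrite sumrMnl. rewrite -/S -/Q sumrMnl -mulr_suml -/S sumr_const card_ord.
  by rewrite -(mulr_natl Q n) !mulr2n; ring.
by move: H; rewrite E; rewrite !mulr2n; lra.
Qed.

Lemma pos_perp (R : realType) (k l : nat) (x : 'rV[R]_(l.+1)) :
  (0 < k)%N -> (l <= k + 4)%N -> Nform k x (omega R k l) = 0 -> x != 0 ->
  0 < Eform k x x.
Proof.
move=> k0 lk; rewrite Nform_omega // /Eform NformE => hw.
set a := x 0 ord0; set S := \sum_j x 0 (lift ord0 j).
set Q := \sum_j _. rewrite -/a -/S in hw.
have hQ : Q = \sum_j x 0 (lift ord0 j) ^+ 2 by apply: eq_bigr => j _; rewrite expr2.
have cs := cs_ineq (fun j => x 0 (lift ord0 j)); rewrite -/S -hQ in cs.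
have Q0 : 0 <= Q by rewrite hQ; apply: sumr_ge0 => j _; apply: sqr_ge0.
have K0 : (0 : R) < k%:R by rewrite ltr0n.
have L0 : (l%:R : R) <= k%:R + 4 by rewrite -(natrD R k 4) ler_nat.
have SE : S = - (k + 2)%:R * a by lra.
rewrite natrD in SE.
move=> hx; rewrite ltNge; apply/negP => hle.
have h2 : l%:R * Q <= (k%:R + 4) * Q by apply: ler_wpM2r.
have a0 : a = 0.
  have : a ^+ 2 <= 0.
    rewrite SE in cs; nra.
  by rewrite expr2 => h; apply/eqP; rewrite -sqrf_eq0; apply/eqP/le_anti; rewrite h expr2 sqr_ge0.
have Qz : Q = 0 by rewrite a0 in hle; lra.
have bz : forall j, x 0 (lift ord0 j) = 0.
  move=> j; have := psumr_eq0P (P := xpredT) (F := fun j => x 0 (lift ord0 j) ^+ 2).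
  move=> /(_ (fun j _ => sqr_ge0 _)) /(_ _ j isT); rewrite -hQ => /(_ Qz) /eqP.
  by rewrite sqrf_eq0 => /eqP.
move/eqP: hx; apply; apply/rowP => i; rewrite [RHS]mxE; case: (unliftP ord0 i) => [j ->|->]; [exact: bz | exact: a0].
Qed.

Lemma sq_bound (R : realType) (t M : R) : 0 <= M -> t ^+ 2 <= M ^+ 2 -> -M <= t <= M.
Proof. move=> M0 h; apply/andP; split; nra. Qed.

Lemma root_bound (R : realType) (k l : nat) (x : 'rV[R]_(l.+1)) :
  (0 < k)%N -> (l <= k + 4)%N -> Nform k x x = -2 -> Nform k x (omega R k l) = 0 ->
  forall i, - (k + 4)%:R <= x 0 i <= (k + 4)%:R.
Proof.
move=> k0 lk; rewrite Nform_omega // NformE => hn hw.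
set a := x 0 ord0 in hn hw *; set S := \sum_j x 0 (lift ord0 j) in hw.
set Q := \sum_j _ in hn.
have hQ : Q = \sum_j x 0 (lift ord0 j) ^+ 2 by apply: eq_bigr => j _; rewrite expr2.
have cs := cs_ineq (fun j => x 0 (lift ord0 j)); rewrite -/S -hQ in cs.
have Q0 : 0 <= Q by rewrite hQ; apply: sumr_ge0 => j _; apply: sqr_ge0.
have K0 : (0 : R) < k%:R by rewrite ltr0n.
have L0 : (l%:R : R) <= k%:R + 4 by rewrite -(natrD R k 4) ler_nat.
have SE : S = - (k%:R + 2) * a by rewrite natrD in hw; lra.
have QE : Q = k%:R * a ^+ 2 + 2 by rewrite expr2; lra.
have h2 : l%:R * Q <= (k%:R + 4) * Q by apply: ler_wpM2r.
have ha : a ^+ 2 <= k%:R + 4 by rewrite SE QE in cs h2; nra.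
have hb : Q <= (k%:R + 4) ^+ 2 by rewrite QE; nra.
move=> i; apply: sq_bound; first by rewrite ler0n.
rewrite natrD; case: (unliftP ord0 i) => [j ->|->].
  apply: le_trans hb; rewrite hQ (bigD1 j) //= lerDl; apply: sumr_ge0 => ? _; apply: sqr_ge0.
rewrite -/a; apply: (le_trans ha); nra.
Qed.

Definition mkv (R : realType) (k l : nat) (f : {ffun 'I_(l.+1) -> 'I_((k + 4).*2.+1)}) :
  'rV[R]_(l.+1) := \row_i ((f i : nat)%:R - (k + 4)%:R).

Definition rootb (R : realType) (k l : nat) (x : 'rV[R]_(l.+1)) :=
  (Nform k x x == -2) && (Nform k x (omega R k l) == 0).

Definition roots (R : realType) (k l : nat) : seq 'rV[R]_(l.+1) :=
  undup (map (@mkv R k l) (filter (fun f => rootb k (mkv R f))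
     (enum {: {ffun 'I_(l.+1) -> 'I_((k + 4).*2.+1)}}))).

Lemma roots_uniq (R : realType) (k l : nat) : uniq (roots R k l).
Proof. exact: undup_uniq. Qed.

Lemma rootsP (R : realType) (k l : nat) (x : 'rV[R]_(l.+1)) :
  (0 < k)%N -> (l <= k + 4)%N -> x \in roots R k l <-> Rlk_roots k x.
Proof.
move=> k0 lk; rewrite mem_undup; split.
  case/mapP => f; rewrite mem_filter => /andP[/andP[/eqP h1 /eqP h2] _] ->.
  split => // i; rewrite mxE; apply: rpredB; exact: natr_int.
case=> hl h1 h2.
have hb := root_bound k0 lk h1 h2.
pose f : {ffun 'I_(l.+1) -> 'I_((k + 4).*2.+1)} := [ffun i => inord (Num.truncn (x 0 i + (k + 4)%:R))].
have E : mkv R f = x.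
  apply/rowP => i; rewrite !mxE ffunE.
  have /andP[hlo hhi] := hb i.
  have y0 : 0 <= x 0 i + (k + 4)%:R by lra.
  have yn : x 0 i + (k + 4)%:R \is a Num.nat.
    by rewrite natrEint y0 andbT; apply: rpredD => //; exact: natr_int.
  rewrite inordK; first by rewrite truncnK //; ring.
  have e : ((k + 4).*2.+1 = (k + 4) + (k + 4) + 1)%N by rewrite addn1 addnn.
  rewrite truncn_lt_nat // e !natrD; lra.
apply/mapP; exists f => //.
by rewrite mem_filter mem_enum andbT /rootb E h1 h2 !eqxx.
Qed.

Definition nfo (R : realType) (k l : nat) (x : 'rV[R]_(l.+1)) : R^o := Nform k x (omega R k l).

Lemma nfo_lin (R : realType) (k l : nat) : linear (@nfo R k l).
Proof. by move=> c x y; rewrite /nfo NformDZl. Qed.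

HB.instance Definition _ (R : realType) (k l : nat) :=
  GRing.isLinear.Build R 'rV[R]_(l.+1) R^o *:%R (@nfo R k l) (@nfo_lin R k l).

Lemma in_perp (R : realType) (k l : nat) (x : 'rV[R]_(l.+1)) :
  (x \in omega_perp R k l) = (Nform k x (omega R k l) == 0).
Proof. by rewrite memv_ker (lfunE (@nfo R k l)). Qed.

Definition c0f (R : realType) (l : nat) (x : 'rV[R]_(l.+1)) : R^o := x 0 ord0.

Lemma c0f_lin (R : realType) (l : nat) : linear (@c0f R l).
Proof. by move=> c x y; rewrite /c0f !mxE. Qed.

HB.instance Definition _ (R : realType) (l : nat) :=
  GRing.isLinear.Build R 'rV[R]_(l.+1) R^o *:%R (@c0f R l) (@c0f_lin R l).

Lemma in_c0 (R : realType) (l : nat) (x : 'rV[R]_(l.+1)) :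
  (x \in lker (linfun (@c0f R l))) = (x 0 ord0 == 0).
Proof. by rewrite memv_ker lfunE. Qed.

Lemma mk_lattice (R : realType) (l : nat) (a : R) (b : 'I_l -> R) :
  a \is a Num.int -> (forall j, b j \is a Num.int) -> in_lattice (mk a b).
Proof. by move=> ha hb i; rewrite mxE; case: (unliftP ord0 i) => [j _|_]. Qed.

Lemma sum_delta (R : realType) (l : nat) (p : 'I_l) (F : 'I_l -> R) :
  \sum_j F j * (j == p)%:R = F p.
Proof.
rewrite (bigD1 p) //= eqxx mulr1 big1 ?addr0 // => j /negbTE ->; exact: mulr0.
Qed.

Definition dA (R : realType) (l : nat) (p q : 'I_l) : 'rV[R]_(l.+1) :=
  mk 0 (fun j => (j == p)%:R - (j == q)%:R).

Lemma dA_root (R : realType) (k l : nat) (p q : 'I_l) : (0 < k)%N -> p != q ->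
  Rlk_roots k (dA R p q).
Proof.
move=> k0 pq; split.
- apply: mk_lattice => [|j]; first exact: rpred0.
  by apply: rpredB; exact: natr_int.
- rewrite /dA Nform_mk !mulr0 sub0r; congr (- _).
  rewrite (bigD1 p) //= (bigD1 q) 1?eq_sym //= big1 ?addr0.
    by rewrite !eqxx [q == p]eq_sym (negbTE pq) /=; ring.
  move=> j /andP[/negbTE -> /negbTE ->]; ring.
- rewrite Nform_omega // mk0 mulr0 sub0r.
  under eq_bigr do rewrite mkS.
  rewrite sumrB.
  have sd : forall r : 'I_l, \sum_(j < l) ((j == r)%:R : R) = 1.
    by move=> r; rewrite -[RHS](sum_delta r (fun=> 1)); apply: eq_bigr => j _; rewrite mul1r.
  by rewrite !sd subrr oppr0.
Qed.

Lemma decompA (R : realType) (k l : nat) (x : 'rV[R]_(l.+1)) :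
  (0 < k)%N -> (0 < l)%N -> (l <= k + 4)%N ->
  x 0 ord0 = 0 -> \sum_(j < l) x 0 (lift ord0 j) = 0 ->
  x \in <<roots R k l>>%VS.
Proof.
move=> k0 l0 lk x0 xs; pose j0 : 'I_l := Ordinal l0.
have -> : x = \sum_(j < l) x 0 (lift ord0 j) *: dA R j j0.
  apply/rowP => i; rewrite summxE.
  case: (unliftP ord0 i) => [j' ->|->].
    under eq_bigr do rewrite mxE mkS mulrBr.
    rewrite sumrB -mulr_suml xs mul0r subr0.
    under eq_bigr do rewrite eq_sym.
    by rewrite sum_delta.
  by rewrite x0; symmetry; apply: big1 => j _; rewrite mxE mk0 mulr0.
apply: memv_suml => j _; apply: memvZ; case: (eqVneq j j0) => [->|ne].
  have -> : dA R j0 j0 = 0.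
    by apply/rowP => i; rewrite !mxE; case: (unliftP ord0 i) => [j' _|_]; rewrite ?subrr.
  exact: mem0v.
by apply: memv_span; apply/rootsP => //; exact: dA_root.
Qed.

Lemma Nform_int (R : realType) (k l : nat) (x y : 'rV[R]_(l.+1)) :
  in_lattice x -> in_lattice y -> Nform k x y \is a Num.int.
Proof.
move=> hx hy; apply: rpred_sum => i _; apply: rpredM; last exact: hy.
apply: rpredM; last exact: hx.
by case: ifP => _; rewrite ?natr_int // rpredN rpred1.
Qed.

Lemma coefE (R : realType) (k l : nat) (x m : 'rV[R]_(l.+1)) :
  Nform k x x = -2 -> 2 * Eform k x m / Eform k x x = - Nform k x m.
Proof.
move=> hx; rewrite /Eform hx opprK.
have h2 : (2 : R) != 0 by rewrite pnatr_eq0.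
by field.
Qed.

Lemma refl_root (R : realType) (k l : nat) (x m : 'rV[R]_(l.+1)) :
  Rlk_roots k x -> Rlk_roots k m ->
  Rlk_roots k (m - (2 * Eform k x m / Eform k x x) *: x).
Proof.
case=> lx nx wx [lm nm wm]; rewrite coefE // scaleNr opprK.
set t := Nform k x m.
have ti : t \is a Num.int by exact: Nform_int.
have -> : m + t *: x = t *: x + m by rewrite addrC.
have hmx : Nform k m x = t by rewrite NformC.
split.
- by move=> i; rewrite !mxE; apply: rpredD; [apply: rpredM | ].
- rewrite NformDZl NformC NformDZl nx hmx NformC NformDZl nm -/t; ring.
- by rewrite NformDZl wx wm; ring.
Qed.

Lemma scale_root (R : realType) (k l : nat) (x : 'rV[R]_(l.+1)) (c : R) :
  Rlk_roots k x -> Rlk_roots k (c *: x) -> c = 1 \/ c = -1.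
Proof.
case=> _ nx _ [_ ncx _].
move: ncx; rewrite NformZl NformC NformZl nx => h.
have : c ^+ 2 == 1.
  by apply/eqP; rewrite expr2; nra.
by rewrite sqrf_eq1 => /orP[/eqP ->|/eqP ->]; [left|right].
Qed.

Lemma rs_of (R : realType) (k l : nat) (V : {vspace 'rV[R]_(l.+1)}) :
  (0 < k)%N -> (l <= k + 4)%N ->
  (forall v, v \in V -> v != 0 -> 0 < Eform k v v) -> <<roots R k l>>%VS = V ->
  root_system (@Eform R k l) V (roots R k l).
Proof.
move=> k0 lk hp hs.
have rP := fun x => @rootsP R k l x k0 lk.
split => //.
- by move=> x c /rP hx /rP hcx; exact: scale_root hx hcx.
- by move=> x m /rP hx /rP hm; apply/rP; apply: refl_root.
- move=> x m /rP [lx nx _] /rP [lm _ _]; rewrite coefE // rpredN.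
  exact: Nform_int.
Qed.

Lemma span_perp (R : realType) (k l : nat) :
  (0 < k)%N -> (l <= k + 4)%N -> (<<roots R k l>> <= omega_perp R k l)%VS.
Proof.
move=> k0 lk; apply/span_subvP => x /(rootsP _ k0 lk) [_ _ h].
by rewrite in_perp h.
Qed.

Lemma pos_perpV (R : realType) (k l : nat) (v : 'rV[R]_(l.+1)) :
  (0 < k)%N -> (l <= k + 4)%N -> v \in omega_perp R k l -> v != 0 -> 0 < Eform k v v.
Proof. by move=> k0 lk; rewrite in_perp => /eqP; exact: pos_perp. Qed.

Lemma sum_lt (R : realType) (l m : nat) (c : R) : (m <= l)%N ->
  \sum_(j < l) (if (j < m)%N then c else 0) = c *+ m.
Proof.
move=> ml; rewrite -big_mkcond /= -(big_ord_widen l (fun=> c) ml).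
by rewrite sumr_const card_ord.
Qed.

Lemma case_big (R : realType) (k l : nat) :
  (0 < k)%N -> (k + 2 <= l)%N -> (l <= k + 4)%N ->
  <<roots R k l>>%VS = omega_perp R k l.
Proof.
move=> k0 kl lk; apply/eqP; rewrite eqEsubv span_perp //=.
pose r0 : 'rV[R]_(l.+1) := mk 1 (fun j : 'I_l => if (j < k + 2)%N then -1 else 0).
have sb : \sum_(j < l) r0 0 (lift ord0 j) = - (k + 2)%:R.
  under eq_bigr do rewrite mkS.
  by rewrite sum_lt // -mulNrn.
have r0r : Rlk_roots k r0.
  split.
  - apply: mk_lattice => [|j]; first exact: rpred1.
    by case: ifP => _; rewrite ?rpred0 // rpredN rpred1.
  - rewrite NformE mk0 !mulr1.
    under eq_bigr do rewrite mkS.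
    rewrite (eq_bigr (fun j : 'I_l => if (j < k + 2)%N then (1 : R) else 0)).
      by rewrite sum_lt // natrD; ring.
    by move=> j _; case: ifP => _; rewrite ?mulr0 // mulrNN mulr1.
  - rewrite Nform_omega // mk0 sb; ring.
apply/subvP => v; rewrite in_perp Nform_omega // => /eqP hv.
have -> : v = v 0 ord0 *: r0 + (v - v 0 ord0 *: r0) by rewrite addrC subrK.
apply: memvD.
  by apply: memvZ; apply: memv_span; apply/rootsP.
have e : forall i, (v - v 0 ord0 *: r0) 0 i = v 0 i - v 0 ord0 * r0 0 i.
  by move=> i; rewrite !mxE.
apply: decompA => //; first by rewrite (leq_trans _ kl) // addn2.
  by rewrite e /r0 mk0 mulr1 subrr.
under eq_bigr do rewrite e.
rewrite sumrB -mulr_sumr sb; lra.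
Qed.

Lemma roots_a0 (R : realType) (k l : nat) (x : 'rV[R]_(l.+1)) :
  (0 < k)%N -> (l < k + 2)%N -> Rlk_roots k x -> x 0 ord0 = 0.
Proof.
move=> k0 lk [lx hn hw].
have lk4 : (l <= k + 4)%N by rewrite (leq_trans (ltnW lk)) // leq_add2l.
move: hn hw; rewrite Nform_omega // NformE => hn hw.
set a := x 0 ord0 in hn hw *; set S := \sum_j x 0 (lift ord0 j) in hw.
set Q := \sum_j _ in hn.
have hQ : Q = \sum_j x 0 (lift ord0 j) ^+ 2 by apply: eq_bigr => j _; rewrite expr2.
have cs := cs_ineq (fun j => x 0 (lift ord0 j)); rewrite -/S -hQ in cs.
have Q0 : 0 <= Q by rewrite hQ; apply: sumr_ge0 => j _; apply: sqr_ge0.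
have K0 : (0 : R) < k%:R by rewrite ltr0n.
have L0 : (l%:R : R) <= k%:R + 1.
  by rewrite -(natrD R k 1) ler_nat addn1 -ltnS -(addn2 k).
have SE : S = - (k%:R + 2) * a by rewrite natrD in hw; lra.
have QE : Q = k%:R * a ^+ 2 + 2 by rewrite expr2; lra.
have h2 : l%:R * Q <= (k%:R + 1) * Q by apply: ler_wpM2r.
apply/eqP; apply: contraT => a0.
have a1 : 1 <= a ^+ 2 by apply: sqr_intr_ge1 => //; exact: lx.
rewrite SE QE in cs h2; nra.
Qed.

Lemma case_small (R : realType) (k l : nat) :
  (0 < k)%N -> (2 <= l)%N -> (l < k + 2)%N ->
  \dim <<roots R k l>>%VS = (\dim (omega_perp R k l)).-1.
Proof.
move=> k0 l2 lk.
have lk4 : (l <= k + 4)%N by rewrite (leq_trans (ltnW lk)) // leq_add2l.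
have l0 : (0 < l)%N by rewrite (leq_trans _ l2).
pose w : 'rV[R]_(l.+1) := mk 1 (fun j : 'I_l => if (j < 1)%N then - (k + 2)%:R else 0).
have sb : \sum_(j < l) w 0 (lift ord0 j) = - (k + 2)%:R.
  by under eq_bigr do rewrite mkS; rewrite sum_lt.
have w00 : w 0 ord0 = 1 by rewrite /w mk0.
have wp : w \in omega_perp R k l by rewrite in_perp Nform_omega // sb w00; apply/eqP; ring.
have E : omega_perp R k l = (<<roots R k l>> + <[w]>)%VS.
  apply/eqP; rewrite eqEsubv subv_add span_perp // -memvE wp andbT /= andbT.
  apply/subvP => v; rewrite in_perp Nform_omega // => /eqP hv.
  have -> : v = (v - v 0 ord0 *: w) + v 0 ord0 *: w by rewrite subrK.
  apply: memv_add; last by apply: memvZ; exact: memv_line.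
  have e : forall i, (v - v 0 ord0 *: w) 0 i = v 0 i - v 0 ord0 * w 0 i.
    by move=> i; rewrite !mxE.
  apply: decompA => //; first by rewrite e w00 mulr1 subrr.
  under eq_bigr do rewrite e.
  rewrite sumrB -mulr_sumr sb; lra.
have D : (<<roots R k l>> :&: <[w]> = 0)%VS.
  apply/eqP; rewrite -subv0; apply/subvP => y /memv_capP [ys /vlineP [c yE]].
  rewrite memv0; subst y.
  have sc : (<<roots R k l>> <= lker (linfun (@c0f R l)))%VS.
    apply/span_subvP => x /(rootsP _ k0 lk4) hx.
    by rewrite in_c0 (roots_a0 k0 lk hx).
  have e0 : (c *: w) 0 ord0 = c by rewrite mxE w00 mulr1.
  move/subvP: sc => sc; have := sc _ ys; rewrite in_c0 e0 => /eqP ->.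
  by rewrite scale0r.
rewrite E dimv_disjoint_sum // dim_vline.
have -> : (w != 0) by apply/eqP => /rowP /(_ ord0); rewrite w00 mxE; exact/eqP/oner_neq0.
by rewrite addn1.
Qed.

Unset Implicit Arguments.

Theorem proposition5p4 (R : realType) (k l : nat) :
  (0 < k)%N -> (2 <= l)%N -> (l <= k + 4)%N ->
  exists s : seq 'rV[R]_(l.+1),
    [/\ uniq s /\ (forall x, x \in s <-> @Rlk_roots R k l x),
        (<<s>> <= omega_perp R k l)%VS,
        root_system (@Eform R k l) <<s>>%VS s,
        ((k + 2 <= l)%N -> root_system (@Eform R k l) (omega_perp R k l) s)
      & ((l < k + 2)%N -> \dim <<s>>%VS = (\dim (omega_perp R k l)).-1)].
Proof.
move=> k0 l2 lk; exists (roots R k l); split.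
- by split; [exact: roots_uniq | move=> x; exact: rootsP].
- exact: span_perp.
- apply: rs_of => // v vs; apply: pos_perpV => //.
  by move/subvP: (@span_perp R k l k0 lk); apply.
- move=> kl; apply: rs_of => //; last exact: case_big.
  by move=> v; exact: pos_perpV.
- by move=> lk2; exact: case_small.
Qed.
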